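(* Let $\mathsf{s} > \mathsf{r} \ge 1$ be integers. Let $\mathbf{Z}$ be a random $\mathsf{s}\times\mathsf{r}$ matrix over $\mathbb{F}_2$, uniformly distributed over the set of all $\mathsf{s}\times\mathsf{r}$ binary matrices of (column) rank $\mathsf{r}$, and let $\mathbf{U}$ be a random $\mathsf{r}\times\mathsf{s}$ matrix over $\mathbb{F}_2$, independent of $\mathbf{Z}$ and uniformly distributed over the set of all $\mathsf{r}\times\mathsf{s}$ binary matrices of (row) rank $\mathsf{r}$. Let $\mathbf{M}=\mathbf{Z}\mathbf{U}$ (the mask). Fix a set $I$ of $\mathsf{r}$ row indices and a set $J$ of $\mathsf{r}$ column indices of $\mathbf{M}$, and let $\mathbf{M}_{I,J}$ denote the $\mathsf{r}\times\mathsf{r}$ submatrix of $\mathbf{M}$ at the intersections of these rows and columns. Then, conditioned on $\mathbf{M}_{I,J}$ being invertible (i.e., its rows and its columns each spanning $\mathbb{F}_2^{\mathsf{r}}$), $\mathbf{M}_{I,J}$ is uniformly distributed over the set of all invertible $\mathsf{r}\times\mathsf{r}$ binary matrices.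
   Context: All arithmetic is over the binary field $\mathbb{F}_2$. The matrix $\mathbf{M}=\mathbf{Z}\mathbf{U}$ is called a masking matrix. *)

(* Defs.v *)
From HB Require Import structures.
From mathcomp Require Import all_boot all_order all_algebra.
Set Implicit Arguments. Unset Strict Implicit. Unset Printing Implicit Defensive.
Import GRing.Theory.
Local Open Scope ring_scope.

Notation F2 := 'F_2.

(* The k-th smallest element of a set I of indices with #|I| = r
   (indices of I listed in increasing order). *)
Definition idx_of (n r : nat) (I : {set 'I_n}) (hI : #|I| = r) (k : 'I_r) : 'I_n :=
  enum_val (cast_ord (esym hI) k).

Definition submx_IJ (m n r : nat) (I : {set 'I_m}) (J : {set 'I_n})
    (hI : #|I| = r) (hJ : #|J| = r) (M : 'M[F2]_(m, n)) : 'M[F2]_r :=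
  \matrix_(i < r, j < r) M (idx_of hI i) (idx_of hJ j).

Definition fullcol (s r : nat) : {set 'M[F2]_(s, r)} := [set Z | \rank Z == r].
Definition fullrow (r s : nat) : {set 'M[F2]_(r, s)} := [set U | \rank U == r].

(* (Z, U) is uniform on fullcol x fullrow (independent uniform Z and U),
   so probabilities of events are counting ratios on this product set. *)
Definition prob_ZU (s r : nat) (E : pred ('M[F2]_(s, r) * 'M[F2]_(r, s))) : rat :=
  (#|[set p in setX (fullcol s r) (fullrow r s) | E p]|%:R /
   #|setX (fullcol s r) (fullrow r s)|%:R)%R.

Definition cprob_ZU (s r : nat) (E C : pred ('M[F2]_(s, r) * 'M[F2]_(r, s))) : rat :=
  (prob_ZU (fun p => E p && C p) / prob_ZU C)%R.

(* Main.v *)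
Require Import Defs.
From HB Require Import structures.
From mathcomp Require Import all_boot all_order all_algebra.
From mathcomp Require Import ring.
Set Implicit Arguments. Unset Strict Implicit. Unset Printing Implicit Defensive.
Import GRing.Theory Num.Theory.
Local Open Scope ring_scope.

Lemma idx_inj n r (I : {set 'I_n}) (hI : #|I| = r) : injective (idx_of hI).
Proof. by move=> a b /enum_val_inj /cast_ord_inj. Qed.

Section Gen.
Variable F : fieldType.

Definition Rs n r (I : {set 'I_n}) (hI : #|I| = r) : 'M[F]_(r, n) :=
  rowsub (idx_of hI) 1%:M.
Definition Cs n r (I : {set 'I_n}) (hI : #|I| = r) : 'M[F]_(n, r) :=
  colsub (idx_of hI) 1%:M.

Lemma RsCs n r (I : {set 'I_n}) (hI : #|I| = r) : Rs hI *m Cs hI = 1%:M.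
Proof.
rewrite /Rs /Cs mul_rowsub_mx mul1mx; apply/matrixP => i j.
by rewrite !mxE (inj_eq (@idx_inj _ _ _ hI)).
Qed.

Lemma subE_gen m n r (I : {set 'I_m}) (J : {set 'I_n}) (hI : #|I| = r) (hJ : #|J| = r)
  (M : 'M[F]_(m, n)) : \matrix_(i < r, j < r) M (idx_of hI i) (idx_of hJ j) = Rs hI *m M *m Cs hJ.
Proof.
rewrite /Rs /Cs mul_rowsub_mx mul1mx mulmx_colsub mulmx1.
by apply/matrixP => i j; rewrite !mxE.
Qed.

Variables (s r : nat) (J : {set 'I_s}) (hJ : #|J| = r).
Definition Pm (G : 'M[F]_r) : 'M[F]_s := 1%:M + Cs hJ *m (G - 1%:M) *m Rs hJ.

Lemma Pm_Cs G : Pm G *m Cs hJ = Cs hJ *m G.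
Proof.
rewrite /Pm mulmxDl mul1mx -!mulmxA RsCs mulmx1 mulmxBr mulmx1.
by rewrite addrC subrK.
Qed.

Lemma PmM_aux (A B : 'M[F]_r) :
  (1%:M + Cs hJ *m A *m Rs hJ) *m (1%:M + Cs hJ *m B *m Rs hJ)
  = 1%:M + Cs hJ *m (A + B + A *m B) *m Rs hJ.
Proof.
set C := Cs hJ; set R := Rs hJ.
have e : C *m A *m R *m (C *m B *m R) = C *m (A *m B) *m R.
  by rewrite -!mulmxA (mulmxA R) /R /C RsCs mul1mx.
rewrite mulmxDl (mulmxDr 1%:M) (mulmxDr (C *m A *m R)) e !mul1mx mulmx1.
rewrite !mulmxDr !mulmxDl !addrA.
by rewrite -!addrA [X in _ + X = _]addrCA.
Qed.

Lemma PmM G H : Pm G *m Pm H = Pm (G *m H).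
Proof.
rewrite /Pm PmM_aux; congr (_ + _ *m _ *m _).
rewrite -[G in RHS](subrK 1%:M) -[H in RHS](subrK 1%:M).
move: (G - 1%:M) (H - 1%:M) => a b.
rewrite mulmxDl !mulmxDr !mul1mx mulmx1 !addrA addrK.
by rewrite [LHS]addrC !addrA.
Qed.

Lemma Pm1 : Pm 1%:M = 1%:M.
Proof. by rewrite /Pm subrr mulmx0 mul0mx addr0. Qed.
End Gen.

Section Count.
Variable F : finFieldType.
Variables (s r : nat) (I J : {set 'I_s}) (hI : #|I| = r) (hJ : #|J| = r).

Definition SS : {set 'M[F]_(s, r) * 'M[F]_(r, s)} :=
  setX [set Z : 'M[F]_(s, r) | \rank Z == r] [set U : 'M[F]_(r, s) | \rank U == r].
Definition sb (M : 'M[F]_s) : 'M[F]_r := Rs F hI *m M *m Cs F hJ.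
Definition NN (B : 'M[F]_r) := #|[set p in SS | sb (p.1 *m p.2) == B]|.

Lemma rank_Pm (U : 'M[F]_(r, s)) G : G \in unitmx -> \rank (U *m Pm hJ G) = \rank U.
Proof.
move=> uG; apply/eqP; rewrite eqn_leq mxrankM_maxl /=.
have e : U *m Pm hJ G *m Pm hJ (invmx G) = U.
  by rewrite -mulmxA PmM mulmxV // Pm1 mulmx1.
rewrite -{1}e; exact: mxrankM_maxl.
Qed.

Lemma NN_le B G : G \in unitmx -> (NN B <= NN (B *m G))%N.
Proof.
move=> uG; rewrite /NN.
set f := fun p : 'M[F]_(s, r) * 'M[F]_(r, s) => (p.1, p.2 *m Pm hJ G).
have finj : injective f.
  move=> [Z U] [Z' U'] [] -> e; congr (_, _).
  have := congr1 (mulmx^~ (Pm hJ (invmx G))) e.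
  by rewrite /= -!mulmxA PmM mulmxV // Pm1 !mulmx1.
rewrite -(card_imset _ finj); apply: subset_leq_card.
apply/subsetP => q /imsetP [[Z U]]; rewrite !inE /= => /andP [/andP [hZ hU] hB] ->.
rewrite /= hZ rank_Pm // hU /=.
move/eqP: hB => <-; rewrite /sb -!mulmxA Pm_Cs !mulmxA.
by [].
Qed.

Lemma NN_eq B G : G \in unitmx -> NN (B *m G) = NN B.
Proof.
move=> uG; apply/eqP; rewrite eqn_leq (NN_le B uG) andbT.
have uG' : invmx G \in unitmx by rewrite unitmx_inv.
have := NN_le (B *m G) uG'.
by rewrite -mulmxA (mulmxV uG) mulmx1.
Qed.

Lemma NN_unit B : B \in unitmx -> NN B = NN 1%:M.
Proof. by move=> uB; rewrite -(mul1mx B) NN_eq. Qed.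

Lemma NN_pos : (0 < NN 1%:M)%N.
Proof.
rewrite /NN card_gt0; apply/set0Pn; exists (Cs F hI : 'M[F]_(s, r), Rs F hJ : 'M[F]_(r, s)).
rewrite !inE /=; apply/andP; split; first (apply/andP; split).
- rewrite eqn_leq rank_leq_col /=.
  have := mxrankM_maxr (Rs F hI) (Cs F hI).
  by rewrite RsCs mxrank1.
- rewrite eqn_leq rank_leq_row /=.
  have := mxrankM_maxl (Rs F hJ) (Cs F hJ).
  by rewrite RsCs mxrank1.
- by rewrite /sb !mulmxA RsCs mul1mx RsCs.
Qed.

Lemma NN_total :
  #|[set p in SS | sb (p.1 *m p.2) \in unitmx]| =
  (#|[set B : 'M[F]_r | B \in unitmx]| * NN 1%:M)%N.
Proof.
rewrite -sum1_card.
rewrite (partition_big (fun p => sb (p.1 *m p.2)) (fun B => B \in unitmx)); last first.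
  by move=> p; rewrite inE => /andP [].
rewrite -sum_nat_const; apply: eq_big => B; first by rewrite inE.
move=> uB; rewrite -(NN_unit uB) /NN -sum1_card.
apply: eq_bigl => p; rewrite !inE.
by case: (sb (p.1 *m p.2) =P B) => [->|]; rewrite ?uB ?andbT ?andbF.
Qed.
End Count.

Lemma ratio (n g t : nat) : (0 < n)%N -> (0 < t)%N ->
  ((n%:R / t%:R) / ((g * n)%:R / t%:R) = 1 / g%:R :> rat)%R.
Proof.
move=> n0 t0; rewrite natrM.
have hn : (n%:R : rat) != 0 by rewrite pnatr_eq0 -lt0n.
have ht : (t%:R : rat) != 0 by rewrite pnatr_eq0 -lt0n.
have [->|g0] := eqVneq g 0%N; first by rewrite !mul0r !invr0 !mulr0 ?div1r ?invr0 ?mulr0.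
have hg : (g%:R : rat) != 0 by rewrite pnatr_eq0.
rewrite !invfM !invrK !div1r; field.
by rewrite hn ht hg.
Qed.

Lemma subE s r (I J : {set 'I_s}) (hI : #|I| = r) (hJ : #|J| = r) (M : 'M[F2]_s) :
  submx_IJ hI hJ M = sb hI hJ M.
Proof. exact: subE_gen. Qed.

Unset Implicit Arguments.
Theorem theorem2 (s r : nat) (hr : (1 <= r)%N) (hrs : (r < s)%N)
    (I J : {set 'I_s}) (hI : #|I| = r) (hJ : #|J| = r)
    (A : 'M[F2]_r) (hA : A \in unitmx) :
  cprob_ZU (s := s) (r := r)
    (fun p => submx_IJ hI hJ (p.1 *m p.2) == A)
    (fun p => submx_IJ hI hJ (p.1 *m p.2) \in unitmx)
  = (1 / #|[set B : 'M[F2]_r | B \in unitmx]|%:R)%R.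
Proof.
rewrite /cprob_ZU /prob_ZU.
have e1 : [set p in setX (fullcol s r) (fullrow r s) |
            (submx_IJ hI hJ (p.1 *m p.2) == A) && (submx_IJ hI hJ (p.1 *m p.2) \in unitmx)]
          = [set p in SS F2 s r | sb hI hJ (p.1 *m p.2) == A].
  apply/setP => p; rewrite !inE !subE.
  by case: (sb hI hJ (p.1 *m p.2) =P A) => [->|]; rewrite ?hA ?andbT ?andbF.
have e2 : [set p in setX (fullcol s r) (fullrow r s) | submx_IJ hI hJ (p.1 *m p.2) \in unitmx]
          = [set p in SS F2 s r | sb hI hJ (p.1 *m p.2) \in unitmx].
  by apply/setP => p; rewrite !inE !subE.
rewrite e1 e2 (NN_total F2 hI hJ) -/(NN hI hJ A) (NN_unit hI hJ hA).
apply: ratio; first exact: NN_pos.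
rewrite card_gt0; apply/set0Pn.
have := NN_pos F2 hI hJ; rewrite /NN card_gt0 => /set0Pn [p]; rewrite inE => /andP [hp _].
by exists p.
Qed.
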